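(* Let ${\bf S}\in\{{\bf Tmd},{\bf Tm4d}\}$. Then for every $n\geq 3$, the formula $\gamma(n)$ is not a theorem of ${\bf S}$.
   Context: Formulas are built from a denumerable set of propositional variables $p_1,p_2,\ldots$ by the unary connectives $\neg$, $\Box$ and the binary connective $\to$; $For$ is the set of all formulas. Abbreviations: $\Diamond\alpha:=\neg\Box\neg\alpha$, $\alpha\vee\beta:=\neg\alpha\to\beta$. For formulas $\alpha_1,\ldots,\alpha_k$ ($k\ge 2$), $\bigvee\{\alpha_1,\ldots,\alpha_k\}:=((\ldots((\alpha_1\vee\alpha_2)\vee\alpha_3)\vee\ldots)\vee\alpha_k)$. For $n\geq 3$: $\alpha(n)=\bigvee\{p_j: 1\le j\le n\}$, $\beta_i(n)=\bigvee\{p_j:1\le j\le n,\ j\ne i\}$ for $1\le i\le n$, and $\gamma(n)=\bigvee\{\Box\neg\Box\alpha(n)\to\Box\neg\Box\beta_i(n): 1\le i\le n\}$. ${\bf Tmd}$ is the Hilbert calculus whose axioms are all instances (over $For$) of the axiom schemas of a standard Hilbert calculus for classical propositional logic in the signature $\{\neg,\to\}$, plus all instances of: (K) $\Box(\alpha\to\beta)\to(\Box\alpha\to\Box\beta)$; (Kdet) $\Box(\alpha\to\beta)\to(\Diamond\alpha\to\Box\beta)$; (K2) $\Diamond(\alpha\to\beta)\to(\Box\alpha\to\Diamond\beta)$; (M1) $\neg\Diamond\alpha\to\Box(\alpha\to\beta)$; (M2) $\Box\beta\to\Box(\alpha\to\beta)$; (M3) $\Diamond\beta\to\Diamond(\alpha\to\beta)$;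 (M4) $\Diamond\neg\alpha\to\Diamond(\alpha\to\beta)$; (T) $\Box\alpha\to\alpha$; (DN1) $\Box\alpha\to\Box\neg\neg\alpha$; (DN2) $\Box\neg\neg\alpha\to\Box\alpha$; modus ponens is the only rule. ${\bf Tm4d}$ (also written ${\bf T4md}$) is ${\bf Tmd}$ plus (4) $\Box\alpha\to\Box\Box\alpha$. *)

(* Defs.v *)
From Stdlib Require Import List Arith.
Import ListNotations.

Inductive form : Type :=
| Var : nat -> form
| Neg : form -> form
| Box : form -> form
| Imp : form -> form -> form.

Definition Dia (a : form) : form := Neg (Box (Neg a)).
Definition Or (a b : form) : form := Imp (Neg a) b.

(* Left-nested big disjunction: bigor [a1;...;ak] = ((a1 ∨ a2) ∨ ...) ∨ ak.
   (Only used with k >= 2; the value on [] is irrelevant.) *)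
Definition bigor (l : list form) : form :=
  match l with
  | [] => Var 0
  | a :: t => fold_left Or t a
  end.

Definition alpha (n : nat) : form := bigor (map Var (seq 1 n)).

Definition beta (n i : nat) : form :=
  bigor (map Var (filter (fun j => negb (Nat.eqb j i)) (seq 1 n))).

Definition gamma (n : nat) : form :=
  bigor (map (fun i => Imp (Box (Neg (Box (alpha n)))) (Box (Neg (Box (beta n i)))))
             (seq 1 n)).

(* Axioms of Tmd: a standard Hilbert calculus for classical propositional
   logic in {¬,→} (Mendelson's A1–A3), plus the modal schemas. *)
Inductive TmdAx : form -> Prop :=
| A1 a b : TmdAx (Imp a (Imp b a))
| A2 a b c : TmdAx (Imp (Imp a (Imp b c)) (Imp (Imp a b) (Imp a c)))
| A3 a b : TmdAx (Imp (Imp (Neg b) (Neg a)) (Imp (Imp (Neg b) a) b))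
| AxK a b : TmdAx (Imp (Box (Imp a b)) (Imp (Box a) (Box b)))
| AxKdet a b : TmdAx (Imp (Box (Imp a b)) (Imp (Dia a) (Box b)))
| AxK2 a b : TmdAx (Imp (Dia (Imp a b)) (Imp (Box a) (Dia b)))
| AxM1 a b : TmdAx (Imp (Neg (Dia a)) (Box (Imp a b)))
| AxM2 a b : TmdAx (Imp (Box b) (Box (Imp a b)))
| AxM3 a b : TmdAx (Imp (Dia b) (Dia (Imp a b)))
| AxM4 a b : TmdAx (Imp (Dia (Neg a)) (Dia (Imp a b)))
| AxT a : TmdAx (Imp (Box a) a)
| AxDN1 a : TmdAx (Imp (Box a) (Box (Neg (Neg a))))
| AxDN2 a : TmdAx (Imp (Box (Neg (Neg a))) (Box a)).

Inductive Tm4dAx : form -> Prop :=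
| Tm4d_Tmd a : TmdAx a -> Tm4dAx a
| Ax4 a : Tm4dAx (Imp (Box a) (Box (Box a))).

Inductive Prov (Ax : form -> Prop) : form -> Prop :=
| Prov_ax a : Ax a -> Prov Ax a
| Prov_mp a b : Prov Ax (Imp a b) -> Prov Ax a -> Prov Ax b.

(* Main.v *)
Require Import Defs.
From Stdlib Require Import List Arith Bool Lia.
Import ListNotations.

Fixpoint occ (j : nat) (a : form) : bool :=
  match a with
  | Var k => Nat.eqb j k
  | Neg a => occ j a
  | Box a => occ j a
  | Imp a b => occ j a || occ j b
  end.

Definition P (n : nat) (a : form) : bool := forallb (fun j => occ j a) (seq 1 n).

Fixpoint bx (n : nat) (a : form) : bool :=
  match a with
  | Var _ => false
  | Neg a => bxn n a
  | Box a => bx n a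
  | Imp a b => bxn n a || bx n b
  end
with bxn (n : nat) (a : form) : bool :=
  match a with
  | Var _ => false
  | Neg a => bx n a
  | Box a => negb (bx n a) && P n a
  | Imp a b => bx n a && bxn n b
  end.

Fixpoint ev (n : nat) (a : form) : bool :=
  match a with
  | Var _ => false
  | Neg a => negb (ev n a)
  | Box a => bx n a
  | Imp a b => negb (ev n a) || ev n b
  end.

Lemma bxT n a : (bx n a = true -> ev n a = true) /\ (bxn n a = true -> ev n a = false).
Proof.
  induction a as [k|a IH|a IH|a IHa b IHb]; simpl.
  - split; discriminate.
  - destruct IH as [H1 H2]; split; intro H.
    + rewrite H2; auto.
    + rewrite H1; auto.
  - split; intro H; auto.
    apply andb_true_iff in H as [H _]. destruct (bx n a); auto; discriminate.
  - destruct IHa as [Ha1 Ha2], IHb as [Hb1 Hb2]; split; intro H.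
    + apply orb_true_iff in H as [H|H].
      * rewrite Ha2; auto.
      * rewrite Hb1; auto with bool.
    + apply andb_true_iff in H as [H H'].
      rewrite Ha1, Hb2; auto.
Qed.

Lemma ax_sound n a : Tm4dAx a -> ev n a = true.
Proof.
  intro H; destruct H as [a H|a].
  - destruct H; simpl;
    repeat match goal with
    | |- context [bx n ?x] => let e := fresh in destruct (bx n x) eqn:e
    | |- context [bxn n ?x] => let e := fresh in destruct (bxn n x) eqn:e
    | |- context [ev n ?x] => let e := fresh in destruct (ev n x) eqn:e
    end; simpl; auto;
    repeat match goal with
    | H : bx n ?x = true |- _ => apply (proj1 (bxT n x)) in H
    | H : bxn n ?x = true |- _ => apply (proj2 (bxT n x)) in H
    end; congruence.
  - simpl. destruct (bx n a); auto.
Qed.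

Lemma sound n S a : (S = TmdAx \/ S = Tm4dAx) -> Prov S a -> ev n a = true.
Proof.
  intros HS H; induction H as [a Ha|a b H1 IH1 H2 IH2].
  - apply ax_sound. destruct HS; subst; auto. constructor; auto.
  - simpl in IH1. rewrite IH2 in IH1. exact IH1.
Qed.

Lemma ev_fold n t a : ev n (fold_left Or t a) = ev n a || existsb (ev n) t.
Proof.
  revert a; induction t as [|x t IH]; intro a; simpl.
  - rewrite orb_false_r; auto.
  - rewrite IH. simpl. rewrite negb_involutive, orb_assoc; auto.
Qed.

Lemma ev_bigor n l : ev n (bigor l) = existsb (ev n) l.
Proof. destruct l; simpl; auto. apply ev_fold. Qed.

Lemma occ_fold j t a : occ j (fold_left Or t a) = occ j a || existsb (occ j) t.
Proof.
  revert a; induction t as [|x t IH]; intro a; simpl.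
  - rewrite orb_false_r; auto.
  - rewrite IH. simpl. rewrite orb_assoc; auto.
Qed.

Lemma existsb_map' {A B} (f : A -> B) (p : B -> bool) l :
  existsb p (map f l) = existsb (fun x => p (f x)) l.
Proof. induction l; simpl; auto. rewrite IHl; auto. Qed.

Lemma occ_bigor j l : j <> 0 -> occ j (bigor (map Var l)) = existsb (Nat.eqb j) l.
Proof.
  intro Hj; destruct l as [|x l]; simpl.
  - destruct j; [lia|auto].
  - rewrite occ_fold. simpl. f_equal. rewrite existsb_map'. auto.
Qed.

Lemma P_alpha n : P n (alpha n) = true.
Proof.
  unfold P, alpha. apply forallb_forall. intros j Hj.
  apply in_seq in Hj. rewrite occ_bigor by lia.
  apply existsb_exists. exists j. split. apply in_seq; lia. apply Nat.eqb_refl.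
Qed.

Lemma P_beta n i : 1 <= i <= n -> P n (beta n i) = false.
Proof.
  intro Hi. unfold P, beta.
  destruct (forallb _ _) eqn:E; auto.
  rewrite forallb_forall in E. specialize (E i).
  rewrite occ_bigor in E by lia.
  assert (Hin : In i (seq 1 n)) by (apply in_seq; lia).
  specialize (E Hin). apply existsb_exists in E as [x [Hx Hx']].
  apply filter_In in Hx as [_ Hx]. apply Nat.eqb_eq in Hx'. subst.
  rewrite Nat.eqb_refl in Hx. discriminate.
Qed.

Lemma ev_alpha_false n : ev n (alpha n) = false.
Proof.
  unfold alpha. rewrite ev_bigor. induction (seq 1 n); simpl; auto.
Qed.

Theorem mainTheorem16 :
  forall S : form -> Prop, (S = TmdAx \/ S = Tm4dAx) ->
  forall n : nat, 3 <= n -> ~ Prov S (gamma n).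
Proof.
  intros S HS n Hn H.
  apply (sound n) in H; auto.
  unfold gamma in H. rewrite ev_bigor, existsb_map' in H.
  apply existsb_exists in H as [i [Hi H]].
  apply in_seq in Hi. simpl in H.
  rewrite P_alpha, P_beta in H by lia.
  assert (bx n (alpha n) = false).
  { destruct (bx n (alpha n)) eqn:E; auto.
    apply (proj1 (bxT n _)) in E. rewrite ev_alpha_false in E. discriminate. }
  rewrite H0 in H. simpl in H. rewrite andb_false_r in H. discriminate.
Qed.
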